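(* Let $M>0$, $q,Q,\alpha,\beta\in\mathbb{R}$, let $\mathbf{n}\in\mathbb{R}^3$ be a constant unit vector, and let $U=\{\mathbf{x}\in\mathbb{R}^3\setminus\{0\}:\alpha\,\mathbf{x}\cdot\mathbf{n}+\beta>0\}$. On $\{(\mathbf{x},\boldsymbol{\Pi}):\mathbf{x}\in U,\ \boldsymbol{\Pi}\in\mathbb{R}^3\}$ consider the bracket $$\{P,R\}=\sum_i\Big(\frac{\partial P}{\partial x^i}\frac{\partial R}{\partial \Pi_i}-\frac{\partial P}{\partial \Pi_i}\frac{\partial R}{\partial x^i}\Big)+q\sum_{i,j}F_{ij}\frac{\partial P}{\partial \Pi_i}\frac{\partial R}{\partial \Pi_j},\qquad F_{ij}=\epsilon_{ijk}B^k,$$ where $\mathbf{B}(\mathbf{x})=\dfrac{\alpha}{\sqrt{\alpha\,\mathbf{x}\cdot\mathbf{n}+\beta}}\,\mathbf{n}$. Let $$H=\frac{\boldsymbol{\Pi}^2}{2M}+\frac{qQ}{r},\qquad r=|\mathbf{x}|,\qquad \mathbf{L}=\mathbf{x}\times\boldsymbol{\Pi},\qquad \mathbf{K}_2=\boldsymbol{\Pi}\times\mathbf{L}+MqQ\,\frac{\mathbf{x}}{r}.$$ Then the function $$K=\mathbf{n}\cdot\Big[\mathbf{K}_2+2q\sqrt{\alpha\,\mathbf{x}\cdot\mathbf{n}+\beta}\;\mathbf{L}\Big]+\alpha q^2\,(\mathbf{x}\times\mathbf{n})^2$$ satisfies $\{K,H\}=0$ identically.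
   Context: $\epsilon_{ijk}$ is the Levi-Civita symbol and indices are raised and lowered with the Euclidean metric $\delta_{ij}$. The variables $\Pi_i$ are the gauge-covariant (kinetic) momenta and the bracket above is the gauge-covariant Poisson bracket ($\{\Pi_i,\Pi_j\}=qF_{ij}$). This models a charge $q$ of mass $M$ in the Coulomb potential of a charge $Q$ superposed with a magnetic field directed along the fixed vector $\mathbf{n}$. *)

(* Defs.v *)
From Stdlib Require Import Reals.
Open Scope R_scope.

(* Vectors of R^3 are represented as functions nat -> R; only the
   components 0,1,2 are meaningful (all sums below range over 0,1,2). *)
Definition vec := nat -> R.

Definition sum3 (f : nat -> R) : R := f 0%nat + f 1%nat + f 2%nat.

Definition eps (i j k : nat) : R :=
  match i, j, k with
  | 0%nat, 1%nat, 2%nat => 1 | 1%nat, 2%nat, 0%nat => 1 | 2%nat, 0%nat, 1%nat => 1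
  | 0%nat, 2%nat, 1%nat => -1 | 2%nat, 1%nat, 0%nat => -1 | 1%nat, 0%nat, 2%nat => -1
  | _, _, _ => 0
  end.

Definition dot (a b : vec) : R := sum3 (fun i => a i * b i).
Definition cross (a b : vec) : vec :=
  fun i => sum3 (fun j => sum3 (fun k => eps i j k * a j * b k)).
Definition vadd (a b : vec) : vec := fun i => a i + b i.
Definition vscal (c : R) (a : vec) : vec := fun i => c * a i.

Definition upd (x : vec) (i : nat) (t : R) : vec :=
  fun j => if Nat.eqb j i then t else x j.

Definition is_grad (P : vec -> vec -> R) (x Pi gx gP : vec) : Prop :=
  forall i : nat, (i < 3)%nat ->
    derivable_pt_lim (fun t => P (upd x i t) Pi) (x i) (gx i) /\
    derivable_pt_lim (fun t => P x (upd Pi i t)) (Pi i) (gP i).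

Definition Bfield (alpha beta : R) (n x : vec) : vec :=
  vscal (alpha / sqrt (alpha * dot x n + beta)) n.

Definition Fmag (alpha beta : R) (n x : vec) (i j : nat) : R :=
  sum3 (fun k => eps i j k * Bfield alpha beta n x k).

Definition bracket (q alpha beta : R) (n x : vec)
    (dPx dPP dRx dRP : vec) : R :=
  sum3 (fun i => dPx i * dRP i - dPP i * dRx i)
  + q * sum3 (fun i => sum3 (fun j =>
          Fmag alpha beta n x i j * dPP i * dRP j)).

Definition rad (x : vec) : R := sqrt (dot x x).

Definition Ham (M q Q : R) (x Pi : vec) : R :=
  dot Pi Pi / (2 * M) + q * Q / rad x.

Definition Lang (x Pi : vec) : vec := cross x Pi.

Definition K2 (M q Q : R) (x Pi : vec) : vec :=
  vadd (cross Pi (Lang x Pi)) (vscal (M * q * Q / rad x) x).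

Definition Kfun (M q Q alpha beta : R) (n : vec) (x Pi : vec) : R :=
  dot n (vadd (K2 M q Q x Pi)
              (vscal (2 * q * sqrt (alpha * dot x n + beta)) (Lang x Pi)))
  + alpha * q ^ 2 * dot (cross x n) (cross x n).

Definition inU (alpha beta : R) (n x : vec) : Prop :=
  ~ (x 0%nat = 0 /\ x 1%nat = 0 /\ x 2%nat = 0) /\ alpha * dot x n + beta > 0.

(* Main.v *)
Require Import Defs.
From Stdlib Require Import Reals Lra Lia.
Open Scope R_scope.

Lemma D_plus f g x lf lg : derivable_pt_lim f x lf -> derivable_pt_lim g x lg ->
  derivable_pt_lim (fun t => f t + g t) x (lf+lg).
Proof. apply derivable_pt_lim_plus. Qed.
Lemma D_minus f g x lf lg : derivable_pt_lim f x lf -> derivable_pt_lim g x lg ->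
  derivable_pt_lim (fun t => f t - g t) x (lf-lg).
Proof. apply derivable_pt_lim_minus. Qed.
Lemma D_mult f g x lf lg : derivable_pt_lim f x lf -> derivable_pt_lim g x lg ->
  derivable_pt_lim (fun t => f t * g t) x (lf * g x + f x * lg).
Proof. apply derivable_pt_lim_mult. Qed.
Lemma D_opp f x lf : derivable_pt_lim f x lf ->
  derivable_pt_lim (fun t => - f t) x (- lf).
Proof. apply derivable_pt_lim_opp. Qed.
Lemma D_const c x : derivable_pt_lim (fun _ => c) x 0.
Proof. apply derivable_pt_lim_const. Qed.
Lemma D_id x : derivable_pt_lim (fun t => t) x 1.
Proof. apply derivable_pt_lim_id. Qed.
Lemma D_inv f x lf : derivable_pt_lim f x lf -> f x <> 0 ->
  derivable_pt_lim (fun t => / f t) x (- lf / (f x * f x)).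
Proof.
  intros H Hn.
  assert (H2 := derivable_pt_lim_div (fct_cte 1) f x 0 lf (derivable_pt_lim_const 1 x) H Hn).
  replace (- lf / (f x * f x)) with ((0 * f x - lf * fct_cte 1 x) / (f x)²).
  - eapply derivable_pt_lim_ext; [|exact H2]. intros; unfold div_fct, fct_cte, Rdiv; ring.
  - unfold fct_cte, Rsqr; field; auto.
Qed.
Lemma D_sqrt f x lf : derivable_pt_lim f x lf -> 0 < f x ->
  derivable_pt_lim (fun t => sqrt (f t)) x (lf * / (2 * sqrt (f x))).
Proof.
  intros H Hp.
  rewrite Rmult_comm.
  apply (derivable_pt_lim_comp f sqrt x lf (/ (2 * sqrt (f x))) H).
  now apply derivable_pt_lim_sqrt.
Qed.
Lemma D_val f x l l' : derivable_pt_lim f x l' -> l' = l -> derivable_pt_lim f x l.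
Proof. intros H ->; exact H. Qed.

Ltac dtac :=
  match goal with
  | |- derivable_pt_lim (fun _ => ?c) _ _ => apply (D_const c)
  | |- derivable_pt_lim (fun t => t) _ _ => apply D_id
  | |- derivable_pt_lim (fun t => @?a t + @?b t) _ _ => apply (D_plus a b); [dtac|dtac]
  | |- derivable_pt_lim (fun t => @?a t - @?b t) _ _ => apply (D_minus a b); [dtac|dtac]
  | |- derivable_pt_lim (fun t => @?a t * @?b t) _ _ => apply (D_mult a b); [dtac|dtac]
  | |- derivable_pt_lim (fun t => - @?a t) _ _ => apply (D_opp a); dtac
  | |- derivable_pt_lim (fun t => / @?a t) _ _ => apply (D_inv a); [dtac|]
  | |- derivable_pt_lim (fun t => sqrt (@?a t)) _ _ => apply (D_sqrt a); [dtac|]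
  end.

Section S.
Variables (M q Q alpha beta : R) (n x Pi : vec).
Definition sv := sqrt (alpha * dot x n + beta).
Definition rv := rad x.
Definition gKx (i : nat) : R :=
  n i * dot Pi Pi - dot n Pi * Pi i
  + M*q*Q*(n i / rv - dot n x * x i / (rv*rv*rv))
  + 2*q*(alpha * n i / (2*sv)) * dot n (cross x Pi)
  + 2*q*sv* cross Pi n i
  + alpha*q^2*(2*(x i * dot n n - dot x n * n i)).
Definition gKP (i : nat) : R :=
  2*dot n x * Pi i - n i * dot Pi x - dot n Pi * x i + 2*q*sv*cross n x i.
Definition gHx (i : nat) : R := - (q*Q * x i/(rv*rv*rv)).
Definition gHP (i : nat) : R := Pi i / M.
End S.

Lemma brk (M q Q alpha beta : R) (n x Pi : vec) :
  0 < M -> dot n n = 1 ->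
  0 < alpha * dot x n + beta -> 0 < dot x x ->
  bracket q alpha beta n x (gKx M q Q alpha beta n x Pi) (gKP q alpha beta n x Pi)
     (gHx q Q x) (gHP M Pi) = 0.
Proof.
  intros HM hn Hs Hr.
  assert (Hs' : sqrt (alpha * dot x n + beta) <> 0)
    by (apply Rgt_not_eq, sqrt_lt_R0; lra).
  assert (Hr' : sqrt (dot x x) <> 0) by (apply Rgt_not_eq, sqrt_lt_R0; lra).
  assert (Hr2 : sqrt (dot x x) * sqrt (dot x x) = dot x x) by (apply sqrt_sqrt; lra).
  unfold bracket, Fmag, Bfield, gKx, gKP, gHx, gHP, sv, rv, rad, vscal in *.
  generalize dependent (sqrt (alpha * dot x n + beta)); intros s Hs'.
  generalize dependent (sqrt (dot x x)); intros r Hr' Hr2.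
  unfold cross, dot, sum3, eps in *; simpl in *.
  assert (hn' : n 0%nat * n 0%nat = 1 - n 1%nat * n 1%nat - n 2%nat * n 2%nat) by lra.
  assert (Hr3 : r * r = x 0%nat * x 0%nat + x 1%nat * x 1%nat + x 2%nat * x 2%nat) by lra.
  field_simplify; [| auto; lra ..].
  replace (r ^ 2) with (r * r) by ring. rewrite Hr2. unfold Rdiv; ring.
Qed.

Ltac dsolve :=
  match goal with Hs : 0 < ?alpha * dot ?x ?n + ?beta, Hr : 0 < dot ?x ?x |- _ =>
  assert (Hs' : sqrt (alpha * (x 0%nat * n 0%nat + x 1%nat * n 1%nat + x 2%nat * n 2%nat) + beta) <> 0)
    by (apply Rgt_not_eq, sqrt_lt_R0; unfold dot, sum3 in *; lra);
  assert (Hr' : sqrt (x 0%nat * x 0%nat + x 1%nat * x 1%nat + x 2%nat * x 2%nat) <> 0)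
    by (apply Rgt_not_eq, sqrt_lt_R0; unfold dot, sum3 in *; lra)
  end;
  unfold Kfun, Ham, K2, Lang, vadd, vscal, rad, cross, dot, sum3, upd, eps, Rdiv; simpl;
  eapply D_val; [dtac | ..]; cbv beta;
  try (unfold dot, sum3 in *; lra);
  try (apply Rgt_not_eq, sqrt_lt_R0; unfold dot, sum3 in *; lra);
  unfold gKx, gKP, gHx, gHP, sv, rv, rad, cross, dot, sum3, eps, Rdiv; simpl;
  field; auto; lra.

Theorem mainTheorem3 (M q Q alpha beta : R) (n : vec)
  (hM : 0 < M) (hn : dot n n = 1) :
  forall x Pi : vec, inU alpha beta n x ->
    (exists gx gP, is_grad (Kfun M q Q alpha beta n) x Pi gx gP) /\
    (exists gx gP, is_grad (Ham M q Q) x Pi gx gP) /\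
    (forall dKx dKP dHx dHP,
        is_grad (Kfun M q Q alpha beta n) x Pi dKx dKP ->
        is_grad (Ham M q Q) x Pi dHx dHP ->
        bracket q alpha beta n x dKx dKP dHx dHP = 0).
Proof.
  intros x Pi [Hx0 Hs0].
  assert (Hs : 0 < alpha * dot x n + beta) by exact Hs0; clear Hs0.
  assert (Hr : 0 < dot x x).
  { destruct (Rlt_or_le 0 (dot x x)) as [H|H]; auto.
    exfalso; apply Hx0; unfold dot, sum3 in H; repeat split; nra. }
  assert (GK : is_grad (Kfun M q Q alpha beta n) x Pi
                 (gKx M q Q alpha beta n x Pi) (gKP q alpha beta n x Pi)).
  { intros i Hi; destruct i as [|[|[|i]]]; [..|lia]; split; dsolve. }
  assert (GH : is_grad (Ham M q Q) x Pi (gHx q Q x) (gHP M Pi)).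
  { intros i Hi; destruct i as [|[|[|i]]]; [..|lia]; split; dsolve. }
  split; [eauto|split; [eauto|]].
  intros dKx dKP dHx dHP HK HH.
  assert (E : forall i, (i < 3)%nat ->
     dKx i = gKx M q Q alpha beta n x Pi i /\ dKP i = gKP q alpha beta n x Pi i /\
     dHx i = gHx q Q x i /\ dHP i = gHP M Pi i).
  { intros i Hi. destruct (HK i Hi), (GK i Hi), (HH i Hi), (GH i Hi).
    repeat split; eapply uniqueness_limite; eauto. }
  destruct (E 0%nat) as (?&?&?&?); [lia|].
  destruct (E 1%nat) as (?&?&?&?); [lia|].
  destruct (E 2%nat) as (?&?&?&?); [lia|].
  rewrite <- (brk M q Q alpha beta n x Pi hM hn Hs Hr).
  unfold bracket, sum3. congruence.
Qed.
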